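(* Let $\mathcal{X}$ be finite, $\mathcal{C}\subseteq\{\pm1\}^{\mathcal{X}}$ a concept class with concept matrix $W\in\mathbb{R}^{\mathcal{C}\times\mathcal{X}}$ and difference matrix $D\in\mathbb{R}^{\mathcal{C}^2\times\mathcal{X}}$, and let $\alpha\ge0$. Then $\gamma_2(D,\alpha)\le\gamma_2(W,\alpha)$. Conversely, $\gamma_2(W,\alpha)\le 2\gamma_2(D,\alpha/2)+1$, and if $\mathcal{C}$ is closed under negation (i.e. $c\in\mathcal{C}\Rightarrow -c\in\mathcal{C}$) then $\gamma_2(W,\alpha)\le\gamma_2(D,\alpha)$.
   Context: The concept matrix $W$ has entries $w_{c,x}=c(x)$. The difference matrix $D$ has rows indexed by ordered pairs $(c,c')\in\mathcal{C}^2$ and entries $d_{(c,c'),x}=\frac12(c(x)-c'(x))\in\{-1,0,1\}$. $\gamma_2(M)=\min\{\|R\|_{2\to\infty}\|A\|_{1\to2}:RA=M\}$, where $\|\cdot\|_{2\to\infty}$ is the maximum Euclidean row norm and $\|\cdot\|_{1\to2}$ the maximum Euclidean column norm; $\gamma_2(M,\alpha)=\min\{\gamma_2(\widetilde M):\max_{i,j}|\widetilde m_{ij}-m_{ij}|\le\alpha\}$. *)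

(* Defs.v *)
From HB Require Import structures.
From mathcomp Require Import all_boot all_order all_algebra.
From mathcomp Require Import boolp classical_sets reals.
Set Implicit Arguments. Unset Strict Implicit. Unset Printing Implicit Defensive.
Import Order.TTheory GRing.Theory Num.Theory.
Local Open Scope ring_scope.
Local Open Scope classical_set_scope.

Definition norm2inf {R : realType} {I : finType} {k : nat} (Rm : I -> 'I_k -> R) : R :=
  \big[Num.max/0]_(i : I) Num.sqrt (\sum_(l < k) Rm i l ^+ 2).

Definition norm12 {R : realType} {J : finType} {k : nat} (A : 'I_k -> J -> R) : R :=
  \big[Num.max/0]_(j : J) Num.sqrt (\sum_(l < k) A l j ^+ 2).

Definition gamma2 {R : realType} {I J : finType} (M : I -> J -> R) : R :=
  inf [set r : R | exists (k : nat) (Rm : I -> 'I_k -> R) (A : 'I_k -> J -> R),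
         (forall i j, \sum_(l < k) Rm i l * A l j = M i j) /\
         r = norm2inf Rm * norm12 A].

Definition gamma2_approx {R : realType} {I J : finType} (M : I -> J -> R) (alpha : R) : R :=
  inf [set r : R | exists M' : I -> J -> R,
         (forall i j, `|M' i j - M i j| <= alpha) /\ r = gamma2 M'].

(* A concept c : X -> {+1,-1} is encoded as a boolean function (true = +1). *)
Definition pm {R : realType} (b : bool) : R := if b then 1 else -1.

Definition concept_type {X : finType} (C : {set {ffun X -> bool}}) : finType :=
  {c : {ffun X -> bool} | c \in C}.

Definition concept_matrix {R : realType} {X : finType} (C : {set {ffun X -> bool}})
  : concept_type C -> X -> R := fun c x => pm (val c x).

Definition difference_matrix {R : realType} {X : finType} (C : {set {ffun X -> bool}})
  : (concept_type C * concept_type C)%type -> X -> R :=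
  fun cc x => (pm (val cc.1 x) - pm (val cc.2 x)) / 2.

Definition neg_concept {X : finType} (c : {ffun X -> bool}) : {ffun X -> bool} :=
  [ffun x => ~~ c x].

Arguments concept_matrix {R X} C.
Arguments difference_matrix {R X} C.

(* Main.v *)
Require Import Defs.
From HB Require Import structures.
From mathcomp Require Import all_boot all_order all_algebra.
From mathcomp Require Import boolp classical_sets reals.
Import Order.TTheory GRing.Theory Num.Theory.
Local Open Scope ring_scope.

From mathcomp Require Import ring lra.
Local Open Scope classical_set_scope.
Local Open Scope ring_scope.



Lemma bm_ge0 {R : realType} (I : finType) (f : I -> R) : 0 <= \big[Num.max/0]_(i : I) Num.sqrt (f i).
Proof. by rewrite bigmax_ge_id. Qed.

Lemma bm_le {R : realType} (I : finType) (f : I -> R) B : 0 <= B -> (forall i, f i <= B ^+ 2) ->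
  \big[Num.max/0]_(i : I) Num.sqrt (f i) <= B.
Proof.
move=> B0 H; apply: bigmax_le => // i _.
by rewrite -(ger0_norm B0) -sqrtr_sqr ler_sqrt ?sqr_ge0.
Qed.

Lemma bm_ge {R : realType} (I : finType) (f : I -> R) i : 0 <= f i ->
  f i <= (\big[Num.max/0]_(i : I) Num.sqrt (f i)) ^+ 2.
Proof.
move=> f0; rewrite -(sqr_sqrtr f0) lerXn2r ?nnegrE ?sqrtr_ge0 ?bm_ge0 //.
exact: (le_bigmax 0 (fun i => Num.sqrt (f i)) i).
Qed.

Lemma sum_sq_ge0 {R : realType} k (g : 'I_k -> R) : 0 <= \sum_(l < k) g l ^+ 2.
Proof. by apply: sumr_ge0 => l _; rewrite sqr_ge0. Qed.

Lemma row_bound {R : realType} (I : finType) k (Rm : I -> 'I_k -> R) i :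
  \sum_(l < k) Rm i l ^+ 2 <= norm2inf Rm ^+ 2.
Proof. exact: (@bm_ge R I (fun i => \sum_(l < k) Rm i l ^+ 2) i (@sum_sq_ge0 R k (Rm i))). Qed.

Lemma col_bound {R : realType} (J : finType) k (A : 'I_k -> J -> R) j :
  \sum_(l < k) A l j ^+ 2 <= norm12 A ^+ 2.
Proof. exact: (@bm_ge R J (fun j => \sum_(l < k) A l j ^+ 2) j (@sum_sq_ge0 R k (fun l => A l j))). Qed.

Lemma n2i_ge0 {R : realType} (I : finType) k (Rm : I -> 'I_k -> R) : 0 <= norm2inf Rm.
Proof. exact: bm_ge0. Qed.
Lemma n12_ge0 {R : realType} (J : finType) k (A : 'I_k -> J -> R) : 0 <= norm12 A.
Proof. exact: bm_ge0. Qed.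

Definition gset {R : realType} {I J : finType} (M : I -> J -> R) := [set r : R | exists (k : nat) (Rm : I -> 'I_k -> R) (A : 'I_k -> J -> R),
         (forall i j, \sum_(l < k) Rm i l * A l j = M i j) /\
         r = norm2inf Rm * norm12 A].

Lemma gset_ne {R : realType} (I J : finType) (M : I -> J -> R) : (gset M !=set0)%classic.
Proof.
exists (norm2inf (fun i (l : 'I_#|J|) => M i (enum_val l)) *
   norm12 (fun (l : 'I_#|J|) j => (enum_val l == j)%:R)).
exists #|J|, (fun i (l : 'I_#|J|) => M i (enum_val l)), (fun (l : 'I_#|J|) j => (enum_val l == j)%:R).
split => // i j.
rewrite -(big_enum_val (fun x => M i x * (x == j)%:R)) /=.
rewrite (bigD1 j) //= eqxx mulr1 big1 ?addr0 // => x /negbTE ->; by rewrite mulr0.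
Qed.

Lemma gamma2_le {R : realType} (I J : finType) (M : I -> J -> R) k (Rm : I -> 'I_k -> R) (A : 'I_k -> J -> R) :
  (forall i j, \sum_(l < k) Rm i l * A l j = M i j) ->
  gamma2 M <= norm2inf Rm * norm12 A.
Proof.
move=> HM; have := @ge_inf R (gset M); apply.
  by exists 0 => x [k' [Rm' [A' [_ ->]]]]; rewrite mulr_ge0 ?n2i_ge0 ?n12_ge0.
by exists k, Rm, A.
Qed.

Lemma gamma2_ge0 {R : realType} (I J : finType) (M : I -> J -> R) : 0 <= gamma2 M.
Proof.
apply: lb_le_inf; first exact: gset_ne.
by move=> x [k' [Rm' [A' [_ ->]]]]; rewrite mulr_ge0 ?n2i_ge0 ?n12_ge0.
Qed.

Lemma gamma2_lb {R : realType} (I J : finType) (M : I -> J -> R) y :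
  (forall k (Rm : I -> 'I_k -> R) (A : 'I_k -> J -> R),
     (forall i j, \sum_(l < k) Rm i l * A l j = M i j) -> y <= norm2inf Rm * norm12 A) ->
  y <= gamma2 M.
Proof.
move=> H; apply: lb_le_inf; first exact: gset_ne.
by move=> x [k' [Rm' [A' [HM ->]]]]; apply: H.
Qed.

Lemma gapx_le {R : realType} (I J : finType) (M M' : I -> J -> R) a :
  (forall i j, `|M' i j - M i j| <= a) -> gamma2_approx M a <= gamma2 M'.
Proof.
move=> HM; have := @ge_inf R [set r : R | exists M' : I -> J -> R,
         (forall i j, `|M' i j - M i j| <= a) /\ r = gamma2 M']; apply.
  by exists 0 => x [M'' [_ ->]]; apply: gamma2_ge0.
by exists M'.
Qed.

Lemma gapx_lb {R : realType} (I J : finType) (M : I -> J -> R) a y : 0 <= a ->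
  (forall M', (forall i j, `|M' i j - M i j| <= a) -> y <= gamma2 M') ->
  y <= gamma2_approx M a.
Proof.
move=> a0 H; apply: lb_le_inf.
  by exists (gamma2 M), M; split => // i j; rewrite subrr normr0.
by move=> x [M' [HM ->]]; apply: H.
Qed.

Lemma gapx_ge0 {R : realType} (I J : finType) (M : I -> J -> R) a : 0 <= a -> 0 <= gamma2_approx M a.
Proof. by move=> a0; apply: gapx_lb => // M' _; apply: gamma2_ge0. Qed.

Arguments row_bound {R I k} Rm i.
Arguments col_bound {R J k} A j.
Arguments n2i_ge0 {R I k} Rm.
Arguments n12_ge0 {R J k} A.
Arguments gamma2_le {R I J M k} Rm A _.
Arguments gamma2_lb {R I J} M y _.
Arguments gapx_le {R I J} M M' a _.
Arguments gapx_lb {R I J} M a y _ _.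
Arguments gapx_ge0 {R I J} M a _.
Arguments gamma2_ge0 {R I J} M.



Lemma diff_rows {R : realType} (I : finType) k (Rm : I -> 'I_k -> R) :
  norm2inf (fun (p : (I * I)%type) l => (Rm p.1 l - Rm p.2 l) / 2) <= norm2inf Rm.
Proof.
rewrite /norm2inf; apply: bm_le; first exact: n2i_ge0.
move=> p; have h1 := row_bound Rm p.1; have h2 := row_bound Rm p.2.
apply: (@le_trans _ _ ((\sum_(l < k) Rm p.1 l ^+ 2 + \sum_(l < k) Rm p.2 l ^+ 2) / 2)); last first.
  by rewrite ler_pdivrMr // mulr_natr mulr2n; apply: lerD.
rewrite -big_split /= mulr_suml; apply: ler_sum => l _.
set a := Rm p.1 l; set b := Rm p.2 l.
have := sqr_ge0 (a + b); rewrite !expr2 => h. nra.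
Qed.

Lemma sub_rows {R : realType} (I I' : finType) k (Rm : I -> 'I_k -> R) (f : I' -> I) :
  norm2inf (fun i l => Rm (f i) l) <= norm2inf Rm.
Proof.
apply: bm_le; first exact: n2i_ge0.
move=> i; exact: row_bound.
Qed.

Lemma ext_bound {R : realType} (I J : finType) k (Rm : I -> 'I_k -> R) (A : 'I_k -> J -> R) (w : J -> R)
   mu nu B (M : I -> J -> R) :
  0 <= B -> (forall j, w j ^+ 2 = 1) ->
  (forall i, mu ^+ 2 * \sum_(l < k) Rm i l ^+ 2 <= B) ->
  (forall j, nu ^+ 2 * \sum_(l < k) A l j ^+ 2 <= B) ->
  (forall i j, M i j = mu * nu * \sum_(l < k) Rm i l * A l j + w j) ->
  gamma2 M <= 1 + B.
Proof.
move=> B0 hw hR hA hM.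
pose R' i (l : 'I_k.+1) := if unlift ord0 l is Some l' then mu * Rm i l' else 1.
pose A' (l : 'I_k.+1) j := if unlift ord0 l is Some l' then nu * A l' j else w j.
have hfac : forall i j, \sum_(l < k.+1) R' i l * A' l j = M i j.
  move=> i j; rewrite hM big_ord_recl /R' /A' unlift_none.
  under eq_bigr do rewrite liftK.
  rewrite mul1r addrC mulr_sumr; congr (_ + _); apply: eq_bigr => l _; ring.
apply: le_trans (gamma2_le R' A' hfac) _.
have s0 : 0 <= Num.sqrt (1 + B) by apply: sqrtr_ge0.
have e : Num.sqrt (1 + B) ^+ 2 = 1 + B by rewrite sqr_sqrtr // addr_ge0.
rewrite -e expr2; apply: ler_pM; rewrite ?n2i_ge0 ?n12_ge0 //.
  apply: bm_le => // i; rewrite e big_ord_recl /R' unlift_none.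
  under eq_bigr do rewrite liftK exprMn.
  by rewrite -mulr_sumr expr1n lerD2l.
apply: bm_le => // j; rewrite e big_ord_recl /A' unlift_none.
under eq_bigr do rewrite liftK exprMn.
by rewrite -mulr_sumr hw lerD2l.
Qed.

Arguments diff_rows {R I k} Rm.
Arguments sub_rows {R I I' k} Rm f.

Lemma pm_sq (R : realType) b : (pm b : R) ^+ 2 = 1.
Proof. by case: b; rewrite /pm ?sqrrN expr1n. Qed.

Lemma part1 (R : realType) (X : finType) (C : {set {ffun X -> bool}}) (alpha : R) :
  0 <= alpha ->
  gamma2_approx (difference_matrix C) alpha <= gamma2_approx (concept_matrix C) alpha.
Proof.
move=> a0; apply: gapx_lb => // W' HW'.
pose D' (cc : (concept_type C * concept_type C)%type) x := (W' cc.1 x - W' cc.2 x) / 2.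
have HD : forall i j, `|D' i j - difference_matrix C i j| <= alpha.
  move=> [c c'] x; rewrite /D' /difference_matrix /=.
  have h1 := HW' c x; have h2 := HW' c' x; move: h1 h2; rewrite /concept_matrix.
  set a := W' c x; set b := W' c' x; set u := pm _; set v := pm _.
  have -> : (a - b) / 2 - (u - v) / 2 = ((a - u) - (b - v)) / 2 by field.
  rewrite normrM [`|2^-1|]ger0_norm ?invr_ge0 // => h1 h2.
  have := ler_normB (a - u) (b - v); lra.
apply: le_trans (gapx_le _ D' alpha HD) _.
apply: gamma2_lb => k Rm A hf.
have hf' : forall i j, \sum_(l < k) (Rm i.1 l - Rm i.2 l) / 2 * A l j = D' i j.
  move=> i j; rewrite /D' -!hf -sumrB mulr_suml; apply: eq_bigr => l _; ring.
apply: le_trans (gamma2_le _ _ hf') _.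
by apply: ler_wpM2r; [exact: n12_ge0 | exact: diff_rows].
Qed.

Lemma part3 (R : realType) (X : finType) (C : {set {ffun X -> bool}}) (alpha : R) :
  0 <= alpha -> (forall c, c \in C -> neg_concept c \in C) ->
  gamma2_approx (concept_matrix C) alpha <= gamma2_approx (difference_matrix C) alpha.
Proof.
move=> a0 hneg; apply: gapx_lb => // D' HD'.
pose ng (c : concept_type C) : concept_type C := exist _ (neg_concept (val c)) (hneg _ (valP c)).
pose W' c x := D' (c, ng c) x.
have HW : forall i j, `|W' i j - concept_matrix C i j| <= alpha.
  move=> c x; have := HD' (c, ng c) x; rewrite /W' /difference_matrix /concept_matrix /=.
  rewrite /neg_concept ffunE; case: (val c x); rewrite /pm /=.
    by have -> : (1 - -1) / 2 = 1 :> R by field.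
  by have -> : (-1 - 1) / 2 = -1 :> R by field.
apply: le_trans (gapx_le _ W' alpha HW) _.
apply: gamma2_lb => k Rm A hf.
have hf' : forall i j, \sum_(l < k) Rm (i, ng i) l * A l j = W' i j by move=> i j; apply: hf.
apply: le_trans (gamma2_le _ _ hf') _.
by apply: ler_wpM2r; [exact: n12_ge0 | exact: (sub_rows Rm (fun i => (i, ng i)))].
Qed.

Lemma sumsq0 k (R : realType) (g : 'I_k -> R) : \sum_(l < k) g l ^+ 2 <= 0 -> forall l, g l = 0.
Proof.
move=> h l; apply/eqP; rewrite -sqrf_eq0; apply/eqP.
have h0 : \sum_(l < k) g l ^+ 2 = 0 by apply/le_anti; rewrite h sum_sq_ge0.
by apply: (psumr_eq0P _ h0) => // i _; rewrite sqr_ge0.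
Qed.

Lemma part2 (R : realType) (X : finType) (C : {set {ffun X -> bool}}) (alpha : R) :
  0 <= alpha ->
  gamma2_approx (concept_matrix C) alpha
    <= 2 * gamma2_approx (difference_matrix C) (alpha / 2) + 1.
Proof.
move=> a0.
have a20 : 0 <= alpha / 2 by rewrite divr_ge0.
have gD0 := gapx_ge0 (difference_matrix C) _ a20.
case: (pickP (fun _ : concept_type C => true)) => [c0 _ | hemp]; last first.
  pose Rm (i : concept_type C) (l : 'I_0) := (0 : R).
  pose A (l : 'I_0) (x : X) := (0 : R).
  have hf : forall i j, \sum_(l < 0) Rm i l * A l j = concept_matrix C i j.
    by move=> i; have := hemp i.
  have hz : forall i j, `|concept_matrix C i j - concept_matrix C i j| <= alpha by move=> i j; rewrite subrr normr0.
  apply: le_trans (gapx_le _ _ alpha hz) _.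
  apply: le_trans (gamma2_le Rm A hf) _.
  have -> : norm2inf Rm = 0.
    by apply/le_anti; rewrite n2i_ge0 andbT; apply: bm_le => // i; have := hemp i.
  by rewrite mul0r; lra.
suff : (gamma2_approx (concept_matrix C) alpha - 1) / 2 <= gamma2_approx (difference_matrix C) (alpha / 2) by lra.
apply: gapx_lb => // D' HD'.
pose W' c x := 2 * D' (c, c0) x + pm (val c0 x).
have HW : forall i j, `|W' i j - concept_matrix C i j| <= alpha.
  move=> c x; have := HD' (c, c0) x; rewrite /W' /difference_matrix /concept_matrix /=.
  set d := D' _ _; set u := pm _; set v := pm _.
  have -> : 2 * d + v - u = 2 * (d - (u - v) / 2) by field.
  rewrite normrM [`|2|]ger0_norm //; lra.
have g1 := gapx_le _ W' alpha HW.
suff : (gamma2 W' - 1) / 2 <= gamma2 D'.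
  move=> h; have : gamma2_approx (concept_matrix C) alpha - 1 <= gamma2 W' - 1 by lra.
  lra.
apply: gamma2_lb => k Rm A hf.
set r := norm2inf Rm; set a := norm12 A.
have r0 : 0 <= r := n2i_ge0 Rm.
have a0' : 0 <= a := n12_ge0 A.
have hw : forall j, pm (val c0 j) ^+ 2 = 1 :> R by move=> j; apply: pm_sq.
suff : gamma2 W' <= 1 + 2 * r * a by lra.
have [ra0 | ra0] := eqVneq (r * a) 0.
  have hD : forall c x, D' (c, c0) x = 0.
    move=> c x; rewrite -hf; move: ra0 => /eqP; rewrite mulf_eq0 => /orP [] /eqP h.
      have := row_bound Rm (c, c0); rewrite -/r h expr0n /= => /sumsq0 z.
      by apply: big1 => l _; rewrite z mul0r.
    have := col_bound A x; rewrite -/a h expr0n /= => /sumsq0 z.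
    by apply: big1 => l _; rewrite z mulr0.
  rewrite -mulrA ra0 mulr0.
  apply: (@ext_bound R _ _ k (fun c l => Rm (c, c0) l) A (fun x => pm (val c0 x)) 0 0 0 W') => //.
  - by move=> i; rewrite expr0n mul0r.
  - by move=> j; rewrite expr0n mul0r.
  - by move=> i j; rewrite /W' hD !mul0r mulr0.
have rp : 0 < r by rewrite lt0r; apply/andP; split => //; apply: contraNneq ra0 => ->; rewrite mul0r.
have ap : 0 < a by rewrite lt0r; apply/andP; split => //; apply: contraNneq ra0 => ->; rewrite mulr0.
pose s := a / (2 * r).
have sp : 0 < s by rewrite divr_gt0 // mulr_gt0.
pose lam := Num.sqrt s.
have lam2 : lam ^+ 2 = s by rewrite sqr_sqrtr // ltW.
have lamp : 0 < lam by rewrite sqrtr_gt0.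
apply: (@ext_bound R _ _ k (fun c l => Rm (c, c0) l) A (fun x => pm (val c0 x)) (2 * lam) lam^-1 (2 * r * a) W') => //.
- by rewrite mulr_ge0 // mulr_ge0.
- move=> i; rewrite exprMn lam2.
  have hb := row_bound Rm (i, c0); rewrite -/r in hb.
  apply: le_trans (_ : 2 ^+ 2 * s * r ^+ 2 <= _).
    by apply: ler_wpM2l => //; rewrite mulr_ge0 ?sqr_ge0 // ltW.
  rewrite le_eqVlt; apply/orP; left; apply/eqP; rewrite /s; field; by rewrite gt_eqF.
- move=> j; rewrite exprVn lam2.
  have hb := col_bound A j; rewrite -/a in hb.
  apply: le_trans (_ : s^-1 * a ^+ 2 <= _).
    by apply: ler_wpM2l => //; rewrite invr_ge0 ltW.
  rewrite le_eqVlt; apply/orP; left; apply/eqP; rewrite /s; field; by rewrite ?gt_eqF.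
- by move=> i j; rewrite /W' -hf mulfK // gt_eqF.
Qed.

Theorem lemma3p3 (R : realType) (X : finType) (C : {set {ffun X -> bool}}) (alpha : R) :
  0 <= alpha ->
  gamma2_approx (difference_matrix C) alpha <= gamma2_approx (concept_matrix C) alpha /\
  gamma2_approx (concept_matrix C) alpha
    <= 2 * gamma2_approx (difference_matrix C) (alpha / 2) + 1 /\
  ((forall c, c \in C -> neg_concept c \in C) ->
   gamma2_approx (concept_matrix C) alpha <= gamma2_approx (difference_matrix C) alpha).
Proof.
move=> a0; split; first exact: part1.
split; first exact: part2.
by move=> h; exact: part3.
Qed.
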